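(* Let $a>0$ and $0\le r_0<a$, and consider, in polar coordinates $(r,\theta)$ about a pole $O$, the circle of radius $a$ whose centre $C$ has polar coordinates $(r_0,\theta_0)$, so that the ray from $O$ in direction $\theta$ meets the circle at distance $$r(\theta)=r_0\cos(\theta-\theta_0)+\sqrt{a^2-r_0^2\sin^2(\theta-\theta_0)} .$$ Let $\theta_1<\theta_2<\theta_1+\pi$ and set $\theta_3=\theta_1+\pi$, $\theta_4=\theta_2+\pi$, $\theta_5=\theta_1+2\pi$. The two lines through $O$ in the directions $\theta_1,\theta_2$ divide the disc into four sectors with areas $S_i=\frac12\int_{\theta_i}^{\theta_{i+1}} r(\theta)^2\,d\theta$, $1\le i\le 4$. Then $$S_1+S_3=a^2(\theta_2-\theta_1)+r_0^2\sin(\theta_2-\theta_1)\cos(\theta_1+\theta_2-2\theta_0),\qquad S_2+S_4=a^2(\pi-\theta_2+\theta_1)-r_0^2\sin(\theta_2-\theta_1)\cos(\theta_1+\theta_2-2\theta_0),$$ and $S_1+S_3=S_2+S_4$ if and only if $$\frac{r_0^2}{2}\Big[\sin 2(\theta_2-\theta_0)-\sin 2(\theta_1-\theta_0)\Big]+a^2\Big(\theta_2-\theta_1-\frac{\pi}{2}\Big)=0 .$$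
   Context: Polar coordinates are taken about the pole $O$; the point with polar coordinates $(r,\theta)$ is $O+r(\cos\theta,\sin\theta)$. The sector $S_i$ is the region $\{O+\rho(\cos\theta,\sin\theta):\ \theta_i\le\theta\le\theta_{i+1},\ 0\le\rho\le r(\theta)\}$. *)

(* Defs.v *)
From Stdlib Require Import Reals.
From Coquelicot Require Import Coquelicot.
Open Scope R_scope.

Definition rpolar (a r0 th0 th : R) : R :=
  r0 * cos (th - th0) + sqrt (a ^ 2 - r0 ^ 2 * (sin (th - th0)) ^ 2).

Definition sector_area (a r0 th0 ta tb : R) : R :=
  / 2 * RInt (fun th => (rpolar a r0 th0 th) ^ 2) ta tb.

(* Main.v *)
Require Import Defs.
From Stdlib Require Import Reals Lra Psatz.
From Coquelicot Require Import Coquelicot.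
Open Scope R_scope.

Lemma arg_pos a r0 x : 0 <= r0 -> r0 < a -> 0 < a ^ 2 - r0 ^ 2 * sin x ^ 2.
Proof.
  intros. destruct (SIN_bound x).
  assert (sin x ^ 2 <= 1) by nra. nra.
Qed.

Lemma f_cont a r0 th0 z : 0 <= r0 -> r0 < a ->
  continuous (fun th => (rpolar a r0 th0 th) ^ 2) z.
Proof.
  intros. apply (ex_derive_continuous (K:=R_AbsRing) (V:=R_NormedModule)). unfold rpolar. auto_derive.
  apply arg_pos; auto.
Qed.

Lemma f_ex a r0 th0 u v : 0 <= r0 -> r0 < a ->
  ex_RInt (fun th => (rpolar a r0 th0 th) ^ 2) u v.
Proof. intros. apply (ex_RInt_continuous (V:=R_CompleteNormedModule)). intros. apply f_cont; auto. Qed.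

Lemma key a r0 th0 t : 0 <= r0 -> r0 < a ->
  (rpolar a r0 th0 t) ^ 2 + (rpolar a r0 th0 (t + PI)) ^ 2
  = 2 * a ^ 2 + 2 * r0 ^ 2 * cos (2 * (t - th0)).
Proof.
  intros. unfold rpolar.
  replace (t + PI - th0) with ((t - th0) + PI) by ring.
  rewrite neg_cos, neg_sin.
  set (x := t - th0).
  replace ((- sin x) ^ 2) with (sin x ^ 2) by ring.
  pose proof (arg_pos a r0 x H H0).
  pose proof (sqrt_sqrt _ (Rlt_le _ _ H1)).
  rewrite cos_2a. pose proof (sin2_cos2 x). unfold Rsqr in *.
  set (s := sqrt _) in *. nra.
Qed.

Lemma antider a r0 th0 u v :
  RInt (fun t => 2 * a ^ 2 + 2 * r0 ^ 2 * cos (2 * (t - th0))) u v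
  = 2 * a ^ 2 * (v - u) + r0 ^ 2 * (sin (2 * (v - th0)) - sin (2 * (u - th0))).
Proof.
  apply is_RInt_unique.
  replace (2 * a ^ 2 * (v - u) + r0 ^ 2 * (sin (2 * (v - th0)) - sin (2 * (u - th0))))
    with ((fun t => 2 * a ^ 2 * t + r0 ^ 2 * sin (2 * (t - th0))) v
          - (fun t => 2 * a ^ 2 * t + r0 ^ 2 * sin (2 * (t - th0))) u) by (simpl; ring).
  apply (is_RInt_derive (fun t => 2 * a ^ 2 * t + r0 ^ 2 * sin (2 * (t - th0)))).
  - intros. auto_derive. 1: auto. unfold Rminus. ring.
  - intros. apply (ex_derive_continuous (K:=R_AbsRing) (V:=R_NormedModule)). auto_derive. auto.
Qed.

Lemma pair a r0 th0 u v : 0 <= r0 -> r0 < a ->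
  sector_area a r0 th0 u v + sector_area a r0 th0 (u + PI) (v + PI)
  = a ^ 2 * (v - u) + r0 ^ 2 / 2 * (sin (2 * (v - th0)) - sin (2 * (u - th0))).
Proof.
  intros. unfold sector_area.
  set (f := fun th => (rpolar a r0 th0 th) ^ 2).
  assert (E : RInt f (u + PI) (v + PI) = RInt (fun t => f (t + PI)) u v).
  { replace (u + PI) with (1 * u + PI) by ring. replace (v + PI) with (1 * v + PI) by ring.
    rewrite <- (RInt_comp_lin f 1 PI u v).
    - apply RInt_ext. intros. unfold scal; simpl; unfold mult; simpl; rewrite Rmult_1_l.
      f_equal. ring.
    - apply f_ex; auto. }
  rewrite E.
  assert (E2 : RInt f u v + RInt (fun t => f (t + PI)) u v
     = RInt (fun t => 2 * a ^ 2 + 2 * r0 ^ 2 * cos (2 * (t - th0))) u v).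
  { transitivity (RInt (fun t => f t + f (t + PI)) u v).
    2: { apply RInt_ext. intros. unfold f. apply key; auto. }
    symmetry. apply (RInt_plus (V:=R_CompleteNormedModule) f (fun t => f (t + PI))).
    - apply f_ex; auto.
    - apply (ex_RInt_continuous (V:=R_CompleteNormedModule)). intros. unfold f.
      apply (continuous_comp (fun t => t + PI) (fun th => (rpolar a r0 th0 th) ^ 2)).
      + apply (ex_derive_continuous (K:=R_AbsRing) (V:=R_NormedModule)). auto_derive. auto.
      + apply f_cont; auto. }
  rewrite antider in E2. lra.
Qed.

Theorem mainTheorem3 (a r0 th0 th1 th2 : R) :
  0 < a -> 0 <= r0 -> r0 < a ->
  th1 < th2 -> th2 < th1 + PI ->
  let th3 := th1 + PI in
  let th4 := th2 + PI in
  let th5 := th1 + 2 * PI in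
  let S1 := sector_area a r0 th0 th1 th2 in
  let S2 := sector_area a r0 th0 th2 th3 in
  let S3 := sector_area a r0 th0 th3 th4 in
  let S4 := sector_area a r0 th0 th4 th5 in
  S1 + S3 = a ^ 2 * (th2 - th1)
            + r0 ^ 2 * sin (th2 - th1) * cos (th1 + th2 - 2 * th0) /\
  S2 + S4 = a ^ 2 * (PI - th2 + th1)
            - r0 ^ 2 * sin (th2 - th1) * cos (th1 + th2 - 2 * th0) /\
  (S1 + S3 = S2 + S4 <->
   r0 ^ 2 / 2 * (sin (2 * (th2 - th0)) - sin (2 * (th1 - th0)))
   + a ^ 2 * (th2 - th1 - PI / 2) = 0).
Proof.
  intros Ha Hr0 Hra H12 H21 th3 th4 th5 S1 S2 S3 S4.
  assert (T : forall X Y, sin (2 * (Y - th0)) - sin (2 * (X - th0))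
     = 2 * sin (Y - X) * cos (X + Y - 2 * th0)).
  { intros. replace (2 * (Y - th0)) with ((X + Y - 2 * th0) + (Y - X)) by ring.
    replace (2 * (X - th0)) with ((X + Y - 2 * th0) - (Y - X)) by ring.
    set (P := X + Y - 2 * th0). set (Q := Y - X).
    rewrite (sin_plus P Q), (sin_minus P Q). ring. }
  assert (A : S1 + S3 = a ^ 2 * (th2 - th1)
            + r0 ^ 2 * sin (th2 - th1) * cos (th1 + th2 - 2 * th0)).
  { unfold S1, S3, th3, th4. rewrite pair by auto. rewrite T. field. }
  assert (B : S2 + S4 = a ^ 2 * (PI - th2 + th1)
            - r0 ^ 2 * sin (th2 - th1) * cos (th1 + th2 - 2 * th0)).
  { unfold S2, S4, th3, th4, th5. replace (th1 + 2 * PI) with ((th1 + PI) + PI) by ring.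
    rewrite pair by auto.
    replace (2 * (th1 + PI - th0)) with (2 * (th1 - th0) + PI + PI) by ring.
    rewrite !neg_sin, Ropp_involutive. pose proof (T th2 th1) as T'.
    replace (sin (2 * (th1 - th0)) - sin (2 * (th2 - th0))) with
      (- (sin (2 * (th2 - th0)) - sin (2 * (th1 - th0)))) by ring.
    rewrite T. field. }
  split; [exact A | split; [exact B|]].
  rewrite A, B, T. split; intros; lra.
Qed.
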